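(* If $\mathcal G$ is an $n$-dimensional $\mathrm{MD}_{n-2}(n)$-algebra with $\dim\mathcal G^1=2$ and $\mathcal G^1$ contained in the centre of $\mathcal G$, then $n-2$ is divisible by $4$.
   Context: $\mathcal G^1=[\mathcal G,\mathcal G]$. An $\mathrm{MD}_k(n)$-algebra is an $n$-dimensional real solvable Lie algebra all of whose non-trivial coadjoint orbits (for its connected simply connected Lie group; $\dim\Omega_F=\operatorname{rank}(F([x_i,x_j]))$ for a basis $\{x_i\}$, non-trivial iff $F|_{\mathcal G^1}\ne0$) have dimension $k$. *)

(* Defs.v *)
(* A real n-dimensional Lie algebra is given by its structure
   constants c i j = [x_i, x_j] in the basis x_0..x_{n-1} of R^n (row vectors). *)
From HB Require Import structures.
From mathcomp Require Import all_boot all_order all_algebra.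
From mathcomp Require Import reals.
Set Implicit Arguments. Unset Strict Implicit. Unset Printing Implicit Defensive.
Import Order.TTheory GRing.Theory Num.Theory.
Local Open Scope ring_scope.

Section LieDefs.
Variables (R : realType) (n : nat).
Variable c : 'I_n -> 'I_n -> 'rV[R]_n.

Definition lie_bracket (x y : 'rV[R]_n) : 'rV[R]_n :=
  \sum_(i < n) \sum_(j < n) (x 0 i * y 0 j) *: c i j.

Definition is_lie_algebra : Prop :=
  (forall x : 'rV[R]_n, lie_bracket x x = 0) /\
  (forall x y z : 'rV[R]_n,
      lie_bracket x (lie_bracket y z) + lie_bracket y (lie_bracket z x)
      + lie_bracket z (lie_bracket x y) = 0).

Definition derived_mx (S : 'M[R]_n) : 'M[R]_n :=
  (\sum_(i < n) \sum_(j < n) <<lie_bracket (row i S) (row j S)>>)%MS.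

Definition G1 : 'M[R]_n := derived_mx 1%:M.

Definition is_solvable : Prop :=
  exists k : nat, iter k derived_mx 1%:M = 0.

Definition orbit_form (F : 'cV[R]_n) : 'M[R]_n :=
  \matrix_(i < n, j < n) (c i j *m F) 0 0.

Definition orbit_dim (F : 'cV[R]_n) : nat := \rank (orbit_form F).

Definition nontrivial_form (F : 'cV[R]_n) : Prop := G1 *m F != 0.

Definition is_MD (k : nat) : Prop :=
  is_lie_algebra /\ is_solvable /\
  forall F : 'cV[R]_n, nontrivial_form F -> orbit_dim F = k.

Definition derived_in_center : Prop :=
  forall v : 'rV[R]_n, (v <= G1)%MS ->
    forall y : 'rV[R]_n, lie_bracket v y = 0.

End LieDefs.

(* Main.v *)
Require Import Defs.
From HB Require Import structures.
From mathcomp Require Import all_boot all_order all_algebra.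
From mathcomp Require Import reals polyrcf perm.
From Stdlib Require Import Classical.
From mathcomp Require Import zify.
Set Implicit Arguments. Unset Strict Implicit. Unset Printing Implicit Defensive.
Import Order.TTheory GRing.Theory Num.Theory.
Local Open Scope ring_scope.
Lemma sp0 (R : idomainType) (q : {poly R}) : q != 0 -> (0 < size q)%N.
Proof. by rewrite size_poly_gt0. Qed.

Lemma strip_roots (R : realType) (p : {poly R}) k : forall u v : {poly R},
  (size v <= k)%N -> (forall t, p.[t] != 0) -> v != 0 -> u ^+ 2 = p * v ^+ 2 ->
  exists u' v' : {poly R}, [/\ u' ^+ 2 = p * v' ^+ 2,
     forall t, v'.[t] != 0 & forall t, u'.[t] != 0].
Proof.
elim: k => [|k IH] u v szv hp v0 e.
  by move: v0; rewrite -size_poly_eq0; move: szv; rewrite leqn0 => ->.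
have [[t vt]|nr] := classic (exists t, v.[t] = 0); last first.
  have nv : forall t, v.[t] != 0 by move=> t; apply/eqP => h; apply: nr; exists t.
  exists u, v; split=> // t; apply/eqP=> ut.
  have := congr1 (fun q => q.[t]) e; rewrite /= !hornerE ut expr0n /= => /esym/eqP.
  by rewrite !mulf_eq0 (negPf (hp t)) (negPf (nv t)).
have ut : u.[t] = 0.
  have := congr1 (fun q => q.[t]) e; rewrite /= !hornerM vt !mulr0.
  by move/eqP; rewrite mulf_eq0 orbb => /eqP.
have /factor_theorem [v1 ev] : root v t by apply/rootP.
have /factor_theorem [u1 eu] : root u t by apply/rootP.
have l0 : ('X - t%:P) != 0 :> {poly R} by rewrite polyXsubC_eq0.
have v10 : v1 != 0 by apply: contraNneq v0 => h; rewrite ev h mul0r.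
apply: (IH u1 v1) => //.
  move: szv; rewrite ev size_mul // size_XsubC addn2 /=.
  by rewrite -(prednK ((sp0 v10))).
apply: (@mulIf _ (('X - t%:P) ^+ 2)); first by rewrite expf_eq0.
by rewrite -exprMn -eu -mulrA -exprMn -ev.
Qed.

Lemma noroot_odd (R : realType) (p : {poly R}) : (forall t, p.[t] != 0) -> odd (size p).
Proof.
move=> h; apply/negPn/negP => /odd_poly_root [x /rootP rx].
by move: (h x); rewrite rx eqxx.
Qed.

Lemma parity4 (R : realType) (p u v : {poly R}) N :
  size p = N.+1 -> (forall t, p.[t] != 0) -> v != 0 -> u ^+ 2 = p * v ^+ 2 ->
  (4 %| N)%N.
Proof.
move=> sp hp v0 e.
have [u' [v' [e' hv hu]]] := strip_roots (leqnn (size v)) hp v0 e.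
have v'0 : v' != 0 by apply/eqP => h; move: (hv 0); rewrite h horner0 eqxx.
have u'0 : u' != 0 by apply/eqP => h; move: (hu 0); rewrite h horner0 eqxx.
have p0 : p != 0 by apply/eqP => h; move: (hp 0); rewrite h horner0 eqxx.
have ou := noroot_odd hu; have ov := noroot_odd hv.
have h1 := size_exp u' 2; have h2 := size_exp v' 2.
have s2 : size (v' ^+ 2) = ((size v').-1 * 2).+1.
  by rewrite -h2 prednK // sp0 // expf_neq0.
have := congr1 (fun q : {poly R} => (size q).-1) e'; rewrite /= h1 size_mul ?expf_neq0 // sp s2.
move: ou ov; rewrite -(prednK (sp0 u'0)) -(prednK (sp0 v'0)) /=.
move: (size u').-1 (size v').-1 => a b.
rewrite -!dvdn2 => /dvdnP [a' ->] /dvdnP [b' ->].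
move=> h; apply/dvdnP; exists (a' - b')%N; lia.
Qed.
Lemma det_schur (K : fieldType) n1 n2 (A : 'M[K]_n1) (B : 'M[K]_(n1, n2)) C D :
  A \in unitmx ->
  \det (block_mx A B C D) = \det A * \det (D - C *m invmx A *m B).
Proof.
move=> uA.
have -> : block_mx A B C D = block_mx 1%:M 0 (C *m invmx A) 1%:M *m
   block_mx A B 0 (D - C *m invmx A *m B).
  rewrite mulmx_block !mul1mx !mul0mx !addr0.
  by rewrite -mulmxA mulVmx // mulmx1 addrC subrK.
by rewrite det_mulmx det_lblock det_ublock !det1 !mul1r.
Qed.

Lemma skew_diag0 (K : fieldType) (h2 : (2%:R : K) != 0) N (W : 'M[K]_N) :
  W^T = -W -> forall i, W i i = 0.
Proof.
move=> sk i; have := congr1 (fun M : 'M_N => M i i) sk; rewrite /= !mxE => /eqP.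
by rewrite -subr_eq0 opprK -mulr2n -mulr_natr mulf_eq0 (negPf h2) orbF => /eqP.
Qed.

Lemma det2_skew (K : fieldType) (A : 'M[K]_2) : A 0 0 = 0 -> A 1 0 = - A 0 1 ->
  \det A = (A 0 1) ^+ 2.
Proof.
move=> h00 h10; rewrite (expand_det_row _ 0) !big_ord_recl big_ord0 addr0 h00 mul0r add0r.
rewrite /cofactor det_mx11 !mxE /=.
have -> : lift 0 (0 : 'I_1) = 1 by apply/val_inj.
have -> : lift 1 (0 : 'I_1) = 0 by apply/val_inj.
by rewrite h10 expr1 mulN1r opprK expr2.
Qed.

Lemma skew_step (K : fieldType) (h2 : (2%:R : K) != 0) N (W : 'M[K]_(2 + N)) :
  (forall S : 'M[K]_N, S^T = - S -> exists d, \det S = d ^+ 2) ->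
  W^T = - W -> W (lshift N 0) (lshift N 1) != 0 -> exists d, \det W = d ^+ 2.
Proof.
move=> IH; rewrite -[W]submxK.
move: (ulsubmx W) (ursubmx W) (dlsubmx W) (drsubmx W) => A B C D.
rewrite tr_block_mx opp_block_mx => /eq_block_mx [hA hC hB hD].
rewrite block_mxEul => A01.
have A00 := skew_diag0 h2 hA 0.
have A10 : A 1 0 = - A 0 1.
  by have := congr1 (fun M : 'M_2 => M 0 1) hA; rewrite /= !mxE.
have dA := det2_skew A00 A10.
have uA : A \in unitmx by rewrite unitmxE dA unitfE expf_neq0.
rewrite det_schur // dA.
have skS : (D - C *m invmx A *m B)^T = - (D - C *m invmx A *m B).
  rewrite raddfB /= !trmx_mul hD hB hC trmx_inv hA.
  have iN : invmx (- A) = - invmx A.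
    by rewrite -!scaleN1r invmxZ ?unitmxZ ?unitrN1 // invrN1.
  rewrite iN.
  by rewrite !(mulmxN, mulNmx) !opprK opprB addrC mulmxA.
have [e de] := IH _ skS.
by exists (A 0 1 * e); rewrite de exprMn.
Qed.

Lemma skew_sq (K : fieldType) (h2 : (2%:R : K) != 0) N (W : 'M[K]_N) :
  W^T = -W -> exists d, \det W = d ^+ 2.
Proof.
elim/ltn_ind: N W => N IH W sk.
have d0 := skew_diag0 h2 sk.
case: N IH W sk d0 => [|[|N]] IH W sk d0.
- by exists 1; rewrite det_mx00 expr1n.
- by exists 0; rewrite det_mx11 d0 expr0n.
have [j Wj|r0] := pickP (fun j => W 0 j != 0); last first.
  exists 0; rewrite (expand_det_row _ 0) big1 ?expr0n // => k _.
  by move: (r0 k) => /= /negbFE/eqP ->; rewrite mul0r.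
have j0 : j != 0 by apply: contraNneq Wj => ->; rewrite d0.
pose s : {perm 'I_N.+2} := tperm 1 j.
pose W1 : 'M[K]_(N.+2) := perm_mx s *m W *m (perm_mx s)^T.
have dW1 : \det W1 = \det W.
  by rewrite !det_mulmx det_tr det_perm mulrC mulrA -expr2 sqrr_sign mul1r.
have sk1 : W1^T = - W1.
  by rewrite /W1 !trmx_mul trmxK sk mulNmx mulmxN mulmxA.
have eW1 i k : W1 i k = W (s i) (s k).
  by rewrite /W1 -row_permE tr_perm_mx -col_permE !mxE.
have s0 : s 0 = 0 by rewrite /s tpermD // eq_sym.
have s1 : s 1 = j by rewrite /s tpermL.
rewrite -dW1 {dW1}.
have W101 : W1 0 1 != 0 by rewrite eW1 s0 s1.
move: W1 sk1 eW1 W101 => W1 sk1 _ W101.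
apply: (skew_step h2 (W := W1)) => //.
  by move=> S; apply: IH.
by move: W101; congr (_ != _); congr (fun_of_matrix W1 _ _); apply/val_inj.
Qed.

Section FD.
Local Open Scope quotient_scope.
Lemma frac_decomp (R : idomainType) (x : {fraction R}) :
  exists u v : R, v != 0 /\ x * tofrac v = tofrac u.
Proof.
elim/quotW: x => r.
exists (\n_r), (\d_r); split; first exact: denom_ratioP.
unlock tofrac.
rewrite /GRing.mul /=.
rewrite !piE; apply/eqmodP => /=; rewrite FracField.equivfE /FracField.mulf !numden_Ratio ?mulf_neq0 ?oner_neq0 ?denom_ratioP //.
by rewrite !mulr1 mulrC.
Qed.
End FD.
Lemma pencil4 (R : realType) N (X Y : 'M[R]_N) :
  X^T = -X -> Y^T = -Y -> \det Y != 0 -> (forall t : R, \det (X + t *: Y) != 0) ->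
  (4 %| N)%N.
Proof.
move=> sX sY dY hX.
have uY : Y \in unitmx by rewrite unitmxE unitfE.
pose A := - (invmx Y *m X).
pose Zp := map_mx polyC X + 'X *: map_mx polyC Y.
have eZ : Zp = map_mx polyC Y *m char_poly_mx A.
  rewrite /Zp /char_poly_mx mulmxBr mul_mx_scalar /A map_mxN mulmxN opprK.
  by rewrite -map_mxM mulmxA mulmxV // mul1mx addrC.
pose p := (\det Y)%:P * char_poly A.
have dZ : \det Zp = p by rewrite eZ det_mulmx det_map_mx.
have hp t : p.[t] != 0.
  have -> : p.[t] = horner_eval t (\det Zp) by rewrite dZ.
  rewrite -det_map_mx.
  have -> : map_mx (horner_eval t) Zp = X + t *: Y.
    by apply/matrixP => i j; rewrite !mxE /horner_eval !hornerE.
  exact: hX.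
have sp : size p = N.+1 by rewrite size_Cmul // size_char_poly.
have skZ : Zp^T = - Zp.
  by rewrite /Zp raddfD /= linearZ /= !map_trmx sX sY !map_mxN scalerN opprD.
pose Zk := map_mx (@tofrac _) Zp.
have skK : Zk^T = - Zk by rewrite /Zk map_trmx skZ map_mxN.
have h2 : (2%:R : {fraction {poly R}}) != 0.
  by rewrite -(rmorph_nat (@tofrac {poly R})) tofrac_eq0 -polyC_natr polyC_eq0 pnatr_eq0.
have [d dd] := skew_sq h2 skK.
rewrite /Zk det_map_mx dZ in dd.
have [u [v [v0 e]]] := frac_decomp d.
apply: (@parity4 R p u v) => //.
have E : tofrac u ^+ 2 = tofrac p * tofrac v ^+ 2 by rewrite -e exprMn dd.
apply/eqP; rewrite -tofrac_eq; apply/eqP.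
by rewrite !rmorphXn rmorphM /= rmorphXn.

Qed.
Section Lie.
Variables (R : realType) (n : nat) (c : 'I_n -> 'I_n -> 'rV[R]_n).

Lemma lbDl x y z : lie_bracket c (x + y) z = lie_bracket c x z + lie_bracket c y z.
Proof.
rewrite /lie_bracket -big_split; apply: eq_bigr => i _.
rewrite -big_split; apply: eq_bigr => j _; by rewrite !mxE mulrDl scalerDl.
Qed.

Lemma lbDr x y z : lie_bracket c x (y + z) = lie_bracket c x y + lie_bracket c x z.
Proof.
rewrite /lie_bracket -big_split; apply: eq_bigr => i _.
rewrite -big_split; apply: eq_bigr => j _; by rewrite !mxE mulrDr scalerDl.
Qed.

Lemma lb_delta_r v k : lie_bracket c v (delta_mx 0 k) = \sum_i v 0 i *: c i k.
Proof.
rewrite /lie_bracket; apply: eq_bigr => i _.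
rewrite (bigD1 k) //= big1 ?addr0 => [|j jk]; first by rewrite mxE !eqxx /= mulr1.
by rewrite mxE (negPf jk) andbF mulr0 scale0r.
Qed.

Lemma lb_delta i j : lie_bracket c (delta_mx 0 i) (delta_mx 0 j) = c i j.
Proof.
rewrite lb_delta_r (bigD1 i) //= big1 ?addr0 => [|k ki]; first by rewrite mxE !eqxx scale1r.
by rewrite mxE (negPf ki) scale0r.
Qed.

Hypothesis Hlie : is_lie_algebra c.

Lemma c_diag i : c i i = 0.
Proof. by rewrite -lb_delta Hlie.1. Qed.

Lemma c_skew i j : c j i = - c i j.
Proof.
have := Hlie.1 (delta_mx 0 i + delta_mx 0 j).
rewrite !lbDl !lbDr !lb_delta !c_diag add0r addr0 => /eqP.
by rewrite addr_eq0 => /eqP ->; rewrite opprK.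
Qed.

Lemma OF_skew F : (orbit_form c F)^T = - orbit_form c F.
Proof.
apply/matrixP => i j; rewrite !mxE -sumrN; apply: eq_bigr => k _.
by rewrite c_skew !mxE mulNr.
Qed.

Lemma OF_lin F1 F2 t : orbit_form c (F1 + t *: F2) = orbit_form c F1 + t *: orbit_form c F2.
Proof.
apply/matrixP => i j; rewrite !mxE big_distrr -big_split; apply: eq_bigr => k _.
by rewrite !mxE mulrDr mulrCA.
Qed.

Hypothesis Hc : derived_in_center c.

Lemma OF_ker F (v : 'rV[R]_n) : (v <= G1 c)%MS -> v *m orbit_form c F = 0.
Proof.
move=> vG; apply/rowP => k.
have := congr1 (fun M : 'rV_n => (M *m F) 0 0) (Hc vG (delta_mx 0 k)).
rewrite /= lb_delta_r mulmx_suml summxE mul0mx.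
move=> H; rewrite mxE; transitivity (\sum_k0 (v 0 k0 *: c k0 k *m F) 0 0); last by rewrite H !mxE.
apply: eq_bigr => i _.
rewrite -scalemxAl [RHS]mxE; congr (_ * _); by rewrite mxE.
Qed.

End Lie.
Lemma rowpid (R : realType) m (i : 'I_2) :
  row (lshift m i) (pid_mx 2 : 'M[R]_(2 + m)) = row (lshift m i) 1%:M.
Proof.
apply/rowP => j; rewrite !mxE /= ltn_ord andbT.
by [].
Qed.

Lemma core (R : realType) m (c : 'I_(2 + m) -> 'I_(2 + m) -> 'rV[R]_(2 + m)) :
  is_MD c m -> \rank (G1 c) = 2 -> derived_in_center c -> (4 %| m)%N.
Proof.
move=> [Hlie [_ HMD]] r2 Hc.
set G := G1 c.
set E := row_ebase G; set L := col_ebase G.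
have eG : L *m pid_mx 2 *m E = G by have := mulmx_ebase G; rewrite r2.
have uE : E \in unitmx by exact: row_ebase_unit.
have uL : L \in unitmx by exact: col_ebase_unit.
have rowE (i : 'I_2) : (row (lshift m i) E <= G)%MS.
  have -> : row (lshift m i) E = row (lshift m i) (pid_mx 2 *m E).
    by rewrite row_mul rowpid -row_mul mul1mx.
  apply: submx_trans (row_sub _ _) _.
  have -> : pid_mx 2 *m E = invmx L *m G by rewrite -eG -!mulmxA mulKmx.
  exact: submxMl.
have ker F (i : 'I_2) : row (lshift m i) E *m orbit_form c F = 0.
  have := OF_ker Hc F (rowE i). exact.
pose M F := E *m orbit_form c F *m E^T.
have skM F : (M F)^T = - M F.
  by rewrite /M !trmx_mul trmxK OF_skew // mulNmx mulmxN mulmxA.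
have rowM F (i : 'I_2) : row (lshift m i) (M F) = 0.
  by rewrite /M !row_mul ker !mul0mx.
have entM F (i : 'I_2) j : M F (lshift m i) j = 0.
  by have := congr1 (fun r : 'rV_(2 + m) => r 0 j) (rowM F i); rewrite !mxE.
have entM' F (i : 'I_2) j : M F j (lshift m i) = 0.
  have := congr1 (fun A : 'M_(2 + m) => A (lshift m i) j) (skM F).
  by rewrite /= mxE => ->; rewrite [LHS]mxE entM oppr0.
pose W F := drsubmx (M F : 'M_(2 + m)).
have blk F : M F = block_mx 0 0 0 (W F).
  have subs (A : 'M[R]_(2 + m)) : (forall (i : 'I_2) j, A (lshift m i) j = 0) ->
      (forall (i : 'I_2) j, A j (lshift m i) = 0) -> A = block_mx 0 0 0 (drsubmx A).
    move=> h1 h2; rewrite -{1}[A]submxK; congr block_mx; apply/matrixP => i j; rewrite !mxE.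
    - exact: h1.
    - exact: h1.
    - exact: h2.
  exact: subs (entM F) (entM' F).
have rfT : row_free E^T by rewrite row_free_unit unitmx_tr.
have rkW F : \rank (orbit_form c F) = \rank (W F).
  have : \rank (M F) = \rank (orbit_form c F).
    rewrite /M mxrankMfree // -mxrank_tr trmx_mul mxrankMfree // mxrank_tr //.
  by rewrite blk rank_diag_block_mx mxrank0 => <-.
have detW F : G *m F != 0 -> \det (W F) != 0.
  move=> h; have := HMD F h; rewrite /orbit_dim rkW => rW.
  have : W F \in unitmx by rewrite -row_free_unit /row_free rW.
  by rewrite unitmxE unitfE.
have linW F1 F2 t : W (F1 + t *: F2) = W F1 + t *: W F2.
  have drl (A B : 'M[R]_(2 + m)) : drsubmx (A + t *: B) = drsubmx A + t *: drsubmx B.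
    by apply/matrixP => i j; rewrite !mxE.
  by rewrite /W /M OF_lin mulmxDr mulmxDl -scalemxAr -scalemxAl drl.
have skW F : (W F)^T = - W F.
  have drN (A : 'M[R]_(2 + m)) : drsubmx (- A) = - drsubmx A.
    by apply/matrixP => i j; rewrite !mxE.
  by rewrite /W trmx_drsub skM drN.
have nontriv (g : 'cV_(2 + m)) (i : 'I_2) : g (lshift m i) 0 != 0 ->
    G *m (invmx E *m g) != 0.
  move=> gi; apply/negP => /eqP h.
  have h2 : (pid_mx 2 : 'M[R]_(2 + m)) *m g = 0.
    apply: (can_inj (mulKmx uL)); rewrite mulmx0 -h -eG -!mulmxA mulKVmx //.
  have := congr1 (fun A : 'cV_(2 + m) => row (lshift m i) A) h2.
  rewrite /= row_mul rowpid -row_mul mul1mx row0 => /rowP /(_ 0).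
  by rewrite !mxE => e; rewrite e eqxx in gi.
pose Fx := invmx E *m delta_mx (lshift m 0) (0 : 'I_1).
pose Fy := invmx E *m delta_mx (lshift m 1) (0 : 'I_1).
have l01 : (lshift m (0 : 'I_2) == lshift m 1) = false by [].
apply: (pencil4 (skW Fx) (skW Fy)).
  by apply: detW; apply: (nontriv _ 1); rewrite mxE !eqxx /= oner_neq0.
move=> t; rewrite -linW; apply: detW.
rewrite /Fx /Fy scalemxAr -mulmxDr; apply: (nontriv _ 0).
rewrite !mxE !eqxx eq_sym l01 /=.
by rewrite mulr0 addr0 eq_sym oner_neq0.
Qed.

Theorem corollary4p6 (R : realType) (n : nat) (c : 'I_n -> 'I_n -> 'rV[R]_n) :
  is_MD c (n - 2) ->
  \rank (G1 c) = 2%N ->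
  derived_in_center c ->
  (4 %| n - 2)%N.
Proof.
case: n c => [|[|m]] c HMD r2 Hc.
- by move: (rank_leq_row (G1 c)); rewrite r2.
- by move: (rank_leq_row (G1 c)); rewrite r2.
- by rewrite !subSS subn0 in HMD *; apply: core HMD r2 Hc.
Qed.
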